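(* Let $q\ge0$, $\delta'\ge0$, and let $X$ be a $(1,q)$-quasi-geodesic metric space in which every triangle whose sides are $(1,q)$-quasi-geodesics is $\delta'$-thin. Then $X$ satisfies the four-point condition with constant $\delta=56\delta'+6q$, i.e. for all $x,y,z,w\in X$, $$d(x,z)+d(y,w)\le\max\{d(x,w)+d(y,z),\ d(x,y)+d(z,w)\}+56\delta'+6q.$$
   Context: A $(1,q)$-quasi-geodesic is a map $\gamma:[a,b]\to X$ with $|s-t|-q\le d(\gamma(s),\gamma(t))\le|s-t|+q$ for all $s,t$; $X$ is a $(1,q)$-quasi-geodesic metric space if any two points are joined by one. For $A\subset X$, $\mathcal{N}_r(A)=\{p: d(p,A)\le r\}$. A triangle with sides $\lambda_1,\lambda_2,\lambda_3$ is $\delta'$-thin if $\lambda_i\subset\mathcal{N}_{\delta'}(\lambda_j\cup\lambda_k)$ for all permutations $(i,j,k)$ of $(1,2,3)$. *)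

(* Defs.v *)
From Stdlib Require Import Reals.
Open Scope R_scope.

Definition is_metric {X : Type} (d : X -> X -> R) : Prop :=
  (forall x y, 0 <= d x y) /\
  (forall x y, d x y = 0 <-> x = y) /\
  (forall x y, d x y = d y x) /\
  (forall x y z, d x z <= d x y + d y z).

(* gamma : [a,b] -> X is a (1,q)-quasi-geodesic from x to y
   (gamma is given as a function on R, only its values on [a,b] matter). *)
Definition is_qgeod {X : Type} (d : X -> X -> R) (q : R)
  (gamma : R -> X) (a b : R) (x y : X) : Prop :=
  a <= b /\ gamma a = x /\ gamma b = y /\
  (forall s t, a <= s <= b -> a <= t <= b ->
     Rabs (s - t) - q <= d (gamma s) (gamma t) /\
     d (gamma s) (gamma t) <= Rabs (s - t) + q).

Definition qgeod_space {X : Type} (d : X -> X -> R) (q : R) : Prop :=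
  forall x y : X, exists gamma a b, is_qgeod d q gamma a b x y.

Definition img {X : Type} (gamma : R -> X) (a b : R) : X -> Prop :=
  fun p => exists t, a <= t <= b /\ p = gamma t.

(* p ∈ N_r(A), i.e. d(p,A) = inf_{a in A} d(p,a) <= r. *)
Definition in_nbhd {X : Type} (d : X -> X -> R) (r : R) (A : X -> Prop) (p : X)
  : Prop :=
  forall e, 0 < e -> exists a, A a /\ d p a <= r + e.

Definition subset_nbhd {X : Type} (d : X -> X -> R) (r : R)
  (B A : X -> Prop) : Prop :=
  forall p, B p -> in_nbhd d r A p.

Definition union {X : Type} (A B : X -> Prop) : X -> Prop := fun p => A p \/ B p.

Definition thin_triangle {X : Type} (d : X -> X -> R) (dt : R)
  (L1 L2 L3 : X -> Prop) : Prop :=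
  subset_nbhd d dt L1 (union L2 L3) /\
  subset_nbhd d dt L2 (union L1 L3) /\
  subset_nbhd d dt L3 (union L1 L2).

Definition qgeod_triangles_thin {X : Type} (d : X -> X -> R) (q dt : R) : Prop :=
  forall (x y z : X) (g1 g2 g3 : R -> X) (a1 b1 a2 b2 a3 b3 : R),
    is_qgeod d q g1 a1 b1 x y ->
    is_qgeod d q g2 a2 b2 y z ->
    is_qgeod d q g3 a3 b3 z x ->
    thin_triangle d dt (img g1 a1 b1) (img g2 a2 b2) (img g3 a3 b3).

(* Main.v *)
Require Import Defs.
From Stdlib Require Import Reals Lra Classical.
Open Scope R_scope.

Lemma eps_le (A B : R) : (forall e, 0 < e -> A <= B + e) -> A <= B.
Proof.
  intros H. destruct (Rle_dec A B) as [h|h]; auto.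
  specialize (H ((A - B)/2)). lra.
Qed.

Lemma Rabs_diff (a b : R) : a <= b -> Rabs (a - b) = b - a.
Proof. intros h. rewrite Rabs_left1 by lra. lra. Qed.

Lemma Rabs_diff' (a b : R) : a <= b -> Rabs (b - a) = b - a.
Proof. intros h. rewrite Rabs_pos_eq by lra. lra. Qed.

Lemma const_qg {X : Type} (d : X -> X -> R) (q : R) (p : X) :
  0 <= q -> d p p = 0 -> is_qgeod d q (fun _ => p) 0 0 p p.
Proof.
  intros Hq Hp. unfold is_qgeod. split; [lra|]. split; [reflexivity|]. split; [reflexivity|].
  intros s0 t0 Hs Ht.
  replace s0 with 0 by lra; replace t0 with 0 by lra.
  rewrite Rminus_0_r, Rabs_R0, Hp; lra.
Qed.

Lemma local_qg {X : Type} (d : X -> X -> R) (q dt : R) (g : R -> X) (a b : R) (x y : X)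
  (s s' : R) :
  0 <= q -> is_metric d -> qgeod_triangles_thin d q dt ->
  is_qgeod d q g a b x y -> a <= s -> s <= s' -> s' <= b -> s' - s <= q/2 ->
  d (g s) (g s') <= dt.
Proof.
  intros Hq [Hpos [Hid [Hsym Htri]]] Ht [Hab [Ha [Hb Hg]]] H1 H2 H3 H4.
  set (e := s' - s).
  set (h := fun tau => g (s + e - Rabs (e - tau))).
  assert (Hdd : d (g s) (g s) = 0) by (apply Hid; reflexivity).
  assert (Hh : is_qgeod d q h 0 (2*e) (g s) (g s)).
  { unfold h. unfold is_qgeod. split; [|split; [|split]].
    - unfold e; lra.
    - f_equal. rewrite Rminus_0_r, Rabs_pos_eq by (unfold e; lra). lra.
    - f_equal. replace (e - 2*e) with (- e) by lra. rewrite Rabs_Ropp, Rabs_pos_eq by (unfold e; lra). lra.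
    - intros t1 t2 Ht1 Ht2. split.
      assert (R1 : Rabs (e - t1) <= e) by (apply Rabs_le; lra).
      assert (R2 : Rabs (e - t2) <= e) by (apply Rabs_le; lra).
      assert (Rt : Rabs (t1 - t2) <= q) by (apply Rabs_le; unfold e in *; lra).
      pose proof (Hpos (g (s + e - Rabs (e - t1))) (g (s + e - Rabs (e - t2)))). lra.
      assert (R1 : Rabs (e - t1) <= e) by (apply Rabs_le; lra).
      assert (R2 : Rabs (e - t2) <= e) by (apply Rabs_le; lra).
      assert (R0 : 0 <= Rabs (e - t1)) by apply Rabs_pos.
      assert (R0' : 0 <= Rabs (e - t2)) by apply Rabs_pos.
      destruct (Hg (s + e - Rabs (e - t1)) (s + e - Rabs (e - t2))) as [_ Hu];
        try (unfold e in *; lra).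
      pose proof (Rabs_triang_inv2 (e - t2) (e - t1)) as Hi.
      replace (s + e - Rabs (e - t1) - (s + e - Rabs (e - t2))) with
        (Rabs (e - t2) - Rabs (e - t1)) in Hu by ring.
      replace (e - t2 - (e - t1)) with (t1 - t2) in Hi by ring.
      lra. }
  pose proof (const_qg d q (g s) Hq Hdd) as Hk.
  destruct (Ht _ _ _ _ _ _ _ _ _ _ _ _ Hh Hk Hk) as [T1 _].
  assert (Him : img h 0 (2*e) (g s')).
  { exists e. split. unfold e; lra. unfold h. f_equal.
    replace (e - e) with 0 by ring. rewrite Rabs_R0. unfold e; ring. }
  apply eps_le. intros ep Hep.
  destruct (T1 _ Him ep Hep) as [p [Hu Hd]].
  destruct Hu as [[t [_ ->]] | [t [_ ->]]]; rewrite Hsym; exact Hd.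
Qed.

Lemma defect_qg {X : Type} (d : X -> X -> R) (q dt : R) (g : R -> X) (a b : R) (p r : X)
  (t : R) :
  0 <= q -> is_metric d -> qgeod_triangles_thin d q dt ->
  is_qgeod d q g a b p r -> a <= t <= b ->
  d p (g t) + d (g t) r <= d p r + 2*q + 2*dt.
Proof.
  intros Hq Hm Ht Hg Htb.
  pose proof Hm as [Hpos [Hid [Hsym Htri]]].
  pose proof Hg as [Hab [Ha [Hb Hgg]]].
  assert (Hdt : 0 <= dt).
  { pose proof (local_qg d q dt g a b p r a a Hq Hm Ht Hg). 
    assert (d (g a) (g a) = 0) by (apply Hid; reflexivity). lra. }
  assert (C1 : d (g a) (g t) <= (t - a) + q/2 + dt).
  { destruct (Rle_dec (t - a) (q/2)).
    - pose proof (local_qg d q dt g a b p r a t Hq Hm Ht Hg). lra.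
    - pose proof (local_qg d q dt g a b p r (t - q/2) t Hq Hm Ht Hg).
      destruct (Hgg a (t - q/2)) as [_ Hu]; try lra.
      rewrite Rabs_diff in Hu by lra.
      pose proof (Htri (g a) (g (t - q/2)) (g t)). lra. }
  assert (C2 : d (g t) (g b) <= (b - t) + q/2 + dt).
  { destruct (Rle_dec (b - t) (q/2)).
    - pose proof (local_qg d q dt g a b p r t b Hq Hm Ht Hg). lra.
    - pose proof (local_qg d q dt g a b p r t (t + q/2) Hq Hm Ht Hg).
      destruct (Hgg (t + q/2) b) as [_ Hu]; try lra.
      rewrite Rabs_diff in Hu by lra.
      pose proof (Htri (g t) (g (t + q/2)) (g b)). lra. }
  destruct (Hgg a b) as [Hl _]; try lra.
  rewrite Rabs_diff in Hl by lra.
  rewrite Ha, Hb in *. lra.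
Qed.
Lemma sup_split {X : Type} (d : X -> X -> R) (q dt : R) (g : R -> X) (c0 c1 : R) (x z : X)
  (A B : X -> Prop) (ep : R) :
  is_metric d -> is_qgeod d q g c0 c1 x z -> A x -> B z ->
  subset_nbhd d dt (img g c0 c1) (union A B) -> 0 < ep ->
  exists t1 t2, c0 <= t1 /\ t1 <= t2 /\ t2 <= c1 /\ t2 - t1 <= ep /\
    (exists v, A v /\ d (g t1) v <= dt + ep) /\
    (exists v, B v /\ d (g t2) v <= dt + ep).
Proof.
  intros [Hpos [Hid [Hsym Htri]]] [Hab [Ha [Hb Hg]]] HA HB Hs Hep.
  assert (Hdt : 0 <= dt + ep).
  { destruct (Hs x (ex_intro _ c0 (conj (conj (Rle_refl _) Hab) (eq_sym Ha))) ep Hep)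
      as [p [_ Hp]]. pose proof (Hpos x p). lra. }
  set (E := fun t => c0 <= t <= c1 /\ exists v, A v /\ d (g t) v <= dt + ep).
  assert (HE0 : E c0).
  { split. lra. exists x. split; auto. rewrite Ha. assert (d x x = 0) by (apply Hid; auto). lra. }
  assert (Hbd : bound E). { exists c1. intros t [Ht _]. lra. }
  destruct (completeness E Hbd (ex_intro _ c0 HE0)) as [s [Hub Hlub]].
  assert (Hs0 : c0 <= s) by (apply Hub; exact HE0).
  assert (Hs1 : s <= c1) by (apply Hlub; intros t [Ht _]; lra).
  assert (Ht1 : exists t1, E t1 /\ s - ep/2 < t1).
  { apply NNPP. intros Hn.
    assert (is_upper_bound E (s - ep/2)).
    { intros t Ht. destruct (Rle_dec t (s - ep/2)); auto.
      exfalso. apply Hn. exists t. split; auto. lra. }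
    pose proof (Hlub _ H). lra. }
  destruct Ht1 as [t1 [HEt1 Hlt]].
  pose proof (Hub t1 HEt1) as Ht1s.
  set (t2 := Rmin c1 (s + ep/2)).
  assert (Ht2a : t2 <= c1) by apply Rmin_l.
  assert (Ht2b : t2 <= s + ep/2) by apply Rmin_r.
  assert (Ht2c : t2 = c1 \/ t2 = s + ep/2).
  { unfold t2, Rmin. destruct (Rle_dec c1 (s + ep/2)); auto. }
  destruct HEt1 as [Hr1 Hv1].
  exists t1, t2. split; [lra|]. split; [destruct Ht2c; lra|]. split; [lra|].
  split; [lra|]. split; [exact Hv1|].
  destruct (classic (E t2)) as [HE2 | HE2].
  - pose proof (Hub t2 HE2).
    assert (t2 = c1) by (destruct Ht2c; lra).
    exists z. split; auto. rewrite H0, Hb.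
    assert (d z z = 0) by (apply Hid; auto). lra.
  - assert (Him : img g c0 c1 (g t2)) by (exists t2; split; [destruct Ht2c; lra | auto]).
    destruct (Hs _ Him ep Hep) as [p [[Hp|Hp] Hd]].
    + exfalso. apply HE2. split. destruct Ht2c; lra. exists p; auto.
    + exists p; auto.
Qed.

Theorem mainTheorem7 (X : Type) (d : X -> X -> R) (q dt : R) :
  0 <= q -> 0 <= dt ->
  is_metric d ->
  qgeod_space d q ->
  qgeod_triangles_thin d q dt ->
  forall x y z w : X,
    d x z + d y w <=
    Rmax (d x w + d y z) (d x y + d z w) + (56 * dt + 6 * q).
Proof.
  intros Hq Hdt Hm Hgs Ht x y z w.
  pose proof Hm as [Hpos [Hid [Hsym Htri]]].
  pose proof (Rmax_l (d x w + d y z) (d x y + d z w)) as M1.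
  pose proof (Rmax_r (d x w + d y z) (d x y + d z w)) as M2.
  apply eps_le. intros e0 He0. set (ep := e0 / 9).
  assert (Hep : 0 < ep) by (unfold ep; lra).
  replace e0 with (9 * ep) by (unfold ep; field).
  destruct (Hgs x z) as [ga [c0 [c1 Hga]]].
  destruct (Hgs w x) as [al [a0 [a1 Hal]]].
  destruct (Hgs z w) as [be [b0 [b1 Hbe]]].
  destruct (Hgs z y) as [s1 [e0' [e1 Hs1]]].
  destruct (Hgs y x) as [s2 [f0 [f1 Hs2]]].
  destruct (Ht _ _ _ _ _ _ _ _ _ _ _ _ Hal Hga Hbe) as [_ [T1 _]].
  destruct (Ht _ _ _ _ _ _ _ _ _ _ _ _ Hga Hs1 Hs2) as [T2 _].
  pose proof Hal as [Ha01 [_ [Ha1 _]]].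
  pose proof Hbe as [Hb01 [Hb0 _]].
  pose proof Hga as [Hc01 [_ [_ Hgg]]].
  destruct (sup_split d q dt ga c0 c1 x z (img al a0 a1) (img be b0 b1) ep Hm Hga
    (ex_intro _ a1 (conj (conj Ha01 (Rle_refl _)) (eq_sym Ha1)))
    (ex_intro _ b0 (conj (conj (Rle_refl _) Hb01) (eq_sym Hb0))) T1 Hep)
    as [t1 [t2 [H1 [H2 [H3 [H4 [[v [[tau [Htau ->]] Hv]] [v' [[tau' [Htau' ->]] Hv']]]]]]]]].
  set (u := ga t1) in *. set (u' := ga t2) in *.
  assert (Huu : d u u' <= dt + 3 * ep).
  { destruct (Rle_dec ep (q/2)).
    - pose proof (local_qg d q dt ga c0 c1 x z t1 t2 Hq Hm Ht Hga). unfold u, u'. lra.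
    - destruct (Hgg t1 t2) as [_ Hu]; try lra. rewrite Rabs_diff in Hu by lra.
      unfold u, u'. lra. }
  pose proof (defect_qg d q dt al a0 a1 w x tau Hq Hm Ht Hal Htau) as D1.
  pose proof (defect_qg d q dt be b0 b1 z w tau' Hq Hm Ht Hbe Htau') as D2.
  set (v := al tau) in *. set (v' := be tau') in *.
  assert (Star : d w x + d z w - d x z >= d w u + d w u' - 9*dt - 4*q - 7*ep).
  { pose proof (Htri x u z). pose proof (Htri u u' z).
    pose proof (Htri w v u). pose proof (Htri u v x).
    pose proof (Htri w v' u'). pose proof (Htri u' v' z).
    rewrite (Hsym v u) in *. rewrite (Hsym v' u') in *. rewrite (Hsym v' z) in *.
    rewrite (Hsym u x) in *. rewrite (Hsym v x) in *. rewrite (Hsym v' w) in *.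
    lra. }
  (* points near sides of triangle xzy *)
  assert (Near : forall t, c0 <= t <= c1 ->
     2 * d w (ga t) >= d x w + d y w - d x y - 4*dt - 2*q - 2*ep \/
     2 * d w (ga t) >= d y w + d z w - d y z - 4*dt - 2*q - 2*ep).
  { intros t Ht0.
    assert (Him : img ga c0 c1 (ga t)) by (exists t; auto).
    destruct (T2 _ Him ep Hep) as [r [[[tr [Htr ->]]|[tr [Htr ->]]] Hd]].
    - right. pose proof (defect_qg d q dt s1 e0' e1 z y tr Hq Hm Ht Hs1 Htr) as D.
      pose proof (Htri y (s1 tr) w). pose proof (Htri z (s1 tr) w).
      pose proof (Htri (s1 tr) (ga t) w).
      rewrite (Hsym y (s1 tr)) in *. rewrite (Hsym (s1 tr) (ga t)) in *.
      rewrite (Hsym (ga t) w) in *. rewrite (Hsym z y) in *. lra.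
    - left. pose proof (defect_qg d q dt s2 f0 f1 y x tr Hq Hm Ht Hs2 Htr) as D.
      pose proof (Htri y (s2 tr) w). pose proof (Htri x (s2 tr) w).
      pose proof (Htri (s2 tr) (ga t) w).
      rewrite (Hsym x (s2 tr)) in *. rewrite (Hsym (s2 tr) (ga t)) in *.
      rewrite (Hsym (ga t) w) in *. rewrite (Hsym y x) in *. lra. }
  rewrite (Hsym w x) in Star.
  assert (Ht1r : c0 <= t1 <= c1) by lra. assert (Ht2r : c0 <= t2 <= c1) by lra.
  destruct (Near t1 Ht1r) as [N1|N1]; destruct (Near t2 Ht2r) as [N2|N2];
  fold u in N1; fold u' in N2; lra.
Qed.
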